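(* Let $(V,E)$ be a graph with $|V|=n$. Then $|\{X\subseteq V\mid X \text{ is a clique}\}|\cdot|\{Y\subseteq V \mid Y\text{ is a coclique}\}| \le (n+1)2^n$.
   Context: A graph is a finite simple undirected graph $(V,E)$. A clique is a set $X\subseteq V$ with every two distinct vertices adjacent; a coclique is a set $Y\subseteq V$ with no two distinct vertices adjacent (the empty set and singletons count as both). *)

(* Defs.v *)
From mathcomp Require Import all_boot.
Set Implicit Arguments. Unset Strict Implicit. Unset Printing Implicit Defensive.

Definition simple_graph (T : finType) (e : rel T) : Prop :=
  symmetric e /\ irreflexive e.

Definition is_clique (T : finType) (e : rel T) (X : {set T}) : bool :=
  [forall x in X, forall y in X, (x != y) ==> e x y].

Definition is_coclique (T : finType) (e : rel T) (Y : {set T}) : bool :=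
  [forall x in Y, forall y in Y, (x != y) ==> ~~ e x y].

(* Main.v *)
Require Import Defs.
From mathcomp Require Import all_boot.
From mathcomp Require Import zify.

Section S.
Variable T : finType.

Definition cl (r : rel T) (U : {set T}) :=
  #|[set X : {set T} | (X \subset U) && is_clique r X]|.

Lemma clique_sub (r : rel T) (X Y : {set T}) :
  X \subset Y -> is_clique r Y -> is_clique r X.
Proof.
move=> sXY /forall_inP H; apply/forall_inP => x xX; apply/forall_inP => y yX.
by move: (H x (subsetP sXY x xX)) => /forall_inP /(_ y (subsetP sXY y yX)).
Qed.

Lemma cl_pow r U : cl r U <= 2 ^ #|U|.
Proof.
rewrite -card_powerset; apply: subset_leq_card; apply/subsetP => X.
by rewrite !inE => /andP[].
Qed.

Lemma cl_split r (A B : {set T}) : cl r (A :|: B) <= cl r A * cl r B.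
Proof.
rewrite /cl -cardsX.
set D := [set X : {set T} | (X \subset A :|: B) && is_clique r X].
pose f := fun X : {set T} => (X :&: A, X :&: B).
have inj : {in D &, injective f}.
  move=> X Y; rewrite !inE => /andP[sX _] /andP[sY _] [h1 h2].
  by rewrite -(setIidPl sX) -(setIidPl sY) !setIUr h1 h2.
rewrite -(card_in_imset inj); apply: subset_leq_card; apply/subsetP => _ /imsetP[X XD ->].
move: XD; rewrite !inE /= => /andP[_ cX].
by rewrite !subsetIr /= !(@clique_sub _ _ _ (subsetIl _ _) cX).
Qed.

Lemma cl_step r U v :
  cl r U <= cl r (U :\ v) + cl r ((U :\ v) :&: [set y | r v y]).
Proof.
rewrite /cl.
set D := [set X : {set T} | _].
set D1 := [set X : {set T} | (X \subset U :\ v) && _].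
set D2 := [set X : {set T} | (X \subset (U :\ v) :&: _) && _].
apply: (leq_trans _ (leq_add (leqnn #|D1|) (leq_imset_card (fun Z => v |: Z) D2))).
apply: (leq_trans _ (leq_card_setU _ _)); apply: subset_leq_card.
apply/subsetP => X; rewrite inE => /andP[sXU cX].
case vX: (v \in X).
  apply/setUP; right; apply/imsetP; exists (X :\ v); last by rewrite setD1K.
  rewrite inE (@clique_sub _ _ _ (subsetDl _ _) cX) andbT.
  apply/subsetP => y; rewrite !inE => /andP[yv yX]; rewrite yv (subsetP sXU _ yX) /=.
  by move/forall_inP: cX => /(_ v vX) /forall_inP /(_ y yX); rewrite eq_sym yv.
apply/setUP; left; rewrite inE cX andbT.
apply/subsetP => y yX; rewrite !inE (subsetP sXU _ yX) andbT.
by apply/eqP => yv; rewrite -yv yX in vX.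
Qed.

Lemma main r m (U : {set T}) : #|U| <= m ->
  cl r U * cl (fun x y => ~~ r x y) U <= #|U|.+1 * 2 ^ #|U|.
Proof.
set nr := fun x y => ~~ r x y.
have zero : forall U : {set T}, #|U| = 0 ->
    cl r U * cl nr U <= #|U|.+1 * 2 ^ #|U|.
  move=> W hW; have h1 := cl_pow r W; have h2 := cl_pow nr W.
  rewrite hW in h1 h2 *; rewrite expn0 in h1 h2; rewrite expn0 muln1.
  by apply: (leq_trans (leq_mul h1 h2)).
elim: m U => [|m IH] U hU.
  by apply: zero; apply/eqP; rewrite -leqn0.
case: (set_0Vmem U) => [->|[v vU]]; first by apply: zero; rewrite cards0.
set U' := U :\ v.
set A := U' :&: [set y | r v y].
set B := U' :&: [set y | nr v y].
have hU' : #|U| = #|U'|.+1 by rewrite (cardsD1 v U) vU.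
have eB : B = U' :\: [set y | r v y] by apply/setP => y; rewrite /B /nr !inE andbC.
have hAB : #|A| + #|B| = #|U'| by rewrite eB cardsID.
have eU : U' = A :|: B by rewrite eB setID.
have hc : cl r U <= cl r U' + cl r A := cl_step r U v.
have hi : cl nr U <= cl nr U' + cl nr B := cl_step nr U v.
have hc' : cl r U' <= cl r A * cl r B by rewrite {1}eU; apply: cl_split.
have hi' : cl nr U' <= cl nr A * cl nr B by rewrite {1}eU; apply: cl_split.
have IH' := IH U' ltac:(lia).
have IHA := IH A ltac:(lia).
have IHB := IH B ltac:(lia).
have hcA := cl_pow r A.
have hiB := cl_pow nr B.
have e1 := leq_mul hc hi.
have t1 : cl r U' * cl nr B <= 2 ^ #|A| * (#|B|.+1 * 2 ^ #|B|).
  apply: (leq_trans (leq_mul hc' (leqnn _))); rewrite -mulnA.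
  exact: leq_mul hcA IHB.
have t2 : cl r A * cl nr U' <= (#|A|.+1 * 2 ^ #|A|) * 2 ^ #|B|.
  apply: (leq_trans (leq_mul (leqnn _) hi')); rewrite mulnA.
  exact: leq_mul IHA hiB.
have t3 := leq_mul hcA hiB.
rewrite -/nr hU'; rewrite -hAB expnD in IH' *; rewrite expnS.
move: e1 t1 t2 t3 IH'.
set c := cl r U; set i := cl nr U; set c' := cl r U'; set i' := cl nr U'.
set cA := cl r A; set iB := cl nr B; set P := 2 ^ #|A|; set Q := 2 ^ #|B|.
set a := #|A|; set b := #|B|.
move=> e1 t1 t2 t3 IH'.
rewrite expnD -/P -/Q.
clearbody c i c' i' cA iB P Q a b.
clear -e1 t1 t2 t3 IH'.
rewrite !mulnDl !mulnDr in e1.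
nia.
Qed.

End S.

Theorem lemma6 (T : finType) (e : rel T) (n : nat) :
  simple_graph e -> #|T| = n ->
  #|[set X : {set T} | is_clique e X]| * #|[set Y : {set T} | is_coclique e Y]|
    <= n.+1 * 2 ^ n.
Proof.
move=> _ hn.
have := @main T e #|[set: T]| [set: T] (leqnn _).
rewrite cardsT hn /cl.
have -> : [set X : {set T} | (X \subset [set: T]) && is_clique e X]
          = [set X : {set T} | is_clique e X].
  by apply/setP => X; rewrite !inE subsetT.
have -> : [set X : {set T} | (X \subset [set: T]) && is_clique (fun x y => ~~ e x y) X]
          = [set X : {set T} | is_coclique e X].
  by apply/setP => X; rewrite !inE subsetT.
by [].
Qed.
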